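(* Let $\lambda\in P^+$. For a POP $\mathcal P$ with bounding sequence $\lambda$, with associated element $v_{\mathcal P}\in\mathbf U(\mathfrak n^-[t])$, the $\mathfrak h$-weight of $v_{\mathcal P}\,w_\lambda$ in $W(\lambda)$ equals the weight of $\mathcal P$.
   Context: Fix $r\ge 1$. Let $\mathfrak{g}=\mathfrak{sp}_{2r}$ be the Lie algebra of complex $2r\times 2r$ matrices $(a_{i,j})$, rows and columns indexed by $1,\dots,r,-r,\dots,-1$, with $a_{i,j}=-\mathrm{sgn}(i)\,\mathrm{sgn}(j)\,a_{-j,-i}$; $E_{i,j}$ are matrix units. The Cartan subalgebra $\mathfrak h$ is spanned by $E_{i,i}-E_{-i,-i}$, $i\in I=\{1,\dots,r\}$, and $\varepsilon_i\in\mathfrak h^*$ satisfy $\langle \varepsilon_i, E_{j,j}-E_{-j,-j}\rangle=\delta_{i,j}$. Root vectors: for $1\le i<j\le r$, $x^+_{i,j-1}=E_{i,j}-E_{-j,-i}$, $x^-_{i,j-1}=E_{j,i}-E_{-i,-j}$, $x^+_{i,\overline{j}}=E_{i,-j}+E_{j,-i}$, $x^-_{i,\overline{j}}=E_{-j,i}+E_{-i,j}$; $x^+_{i,\overline{i}}=E_{i,-i}$, $x^-_{i,\overline{i}}=E_{-i,i}$; $x^\pm_{i,r}:=x^\pm_{i,\overline{r}}$. Let $\mathfrak n^\pm$ be spanned by $x^\pm_{i,j}$ ($1\le i\le j<r$) and $x^\pm_{i,\overline{j}}$ ($1\le i\le j\le r$). Fundamental weights $\omega_i=\varepsilon_1+\dots+\varepsilon_i$;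 $P^+=\sum_i\mathbb N\omega_i$; for $\lambda=\sum m_i\omega_i$ put $\lambda_i=m_i+\dots+m_r$. $\mathfrak g[t]=\mathfrak g\otimes\mathbb C[t]$ is the current algebra. The local Weyl module $W(\lambda)$ is the cyclic $\mathfrak g[t]$-module generated by $w_\lambda$ with relations $\mathfrak n^+[t]w_\lambda=0$, $(h\otimes t^s)w_\lambda=\langle\lambda,h\rangle\delta_{s,0}w_\lambda$, $(x^-_{i,i})^{m_i+1}w_\lambda=0$. A pattern with bounding sequence $\lambda$: integers $\eta^j_i,\lambda^j_i$ ($1\le i\le j\le r$), $\lambda^r_i=\lambda_i$, with $\lambda^j_i\ge\eta^j_i\ge\lambda^j_{i+1}$ ($1\le i\le j\le r$, $\lambda^j_{j+1}=0$) and $\eta^{j+1}_i\ge\lambda^j_i\ge\eta^{j+1}_{i+1}$ ($1\le i\le j<r$). Its weight is $\sum_{j=1}^r a_j\varepsilon_j$ with $a_j=2\sum_{i=1}^j\eta^j_i-\sum_{i=1}^j\lambda^j_i-\sum_{i=1}^{j-1}\lambda^{j-1}_i$. Differences: $\ell_{i,\overline{j}}=\lambda^j_i-\eta^j_i$, $\ell'_{i,\overline{j}}=\eta^j_i-\lambda^j_{i+1}$ ($1\le i\le j\le r$); $\ell_{i,j}=\eta^{j+1}_i-\lambda^j_i$, $\ell'_{i,j}=\lambda^j_i-\eta^{j+1}_{i+1}$ ($1\le i\le j<r$). A partition $\mathbf s=(\mathbf s(1)\le\dots\le\mathbf s(\ell))\in\mathbb N^\ell$ fits into $(\ell,\ell')$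 if $\mathbf s(\ell)\le\ell'$. A POP is a pattern with partitions $\mathbf s_{i,\overline{j}}$ fitting $(\ell_{i,\overline{j}},\ell'_{i,\overline{j}})$ and $\mathbf s_{i,j}$ fitting $(\ell_{i,j},\ell'_{i,j})$; its weight is the weight of its pattern. With $\mathbf{x}(\ell,\mathbf s)=(x\otimes t^{\mathbf s(1)})\cdots(x\otimes t^{\mathbf s(\ell)})$, the associated element is $v_{\mathcal P}=X_{\overline1}X_1\cdots X_{\overline{r-1}}X_{r-1}X_{\overline r}$, $X_{\overline j}=\prod_{i=1}^{j}\mathbf x^-_{i,\overline j}(\ell_{i,\overline j},\mathbf s_{i,\overline j})$, $X_j=\prod_{i=1}^{j}\mathbf x^-_{i,j}(\ell_{i,j},\mathbf s_{i,j})$ (factors in increasing order of $i$). *)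

(* Defs.v *)
From HB Require Import structures.
From mathcomp Require Import all_boot all_order all_algebra.
From mathcomp Require Import reals complex.
Set Implicit Arguments. Unset Strict Implicit. Unset Printing Implicit Defensive.
Import Order.TTheory GRing.Theory Num.Theory.
Local Open Scope ring_scope.

Section SpCurrent.
Variable C : fieldType.
Variable r : nat.

(* Row/column indices 1..r, -r..-1 : inl k stands for k+1, inr k for -(k+1). *)
Definition Idx := ('I_r + 'I_r)%type.

Definition lab (c : Idx) : int :=
  match c with inl k => (k.+1)%:Z | inr k => - (k.+1)%:Z end.

Definition negi (c : Idx) : Idx :=
  match c with inl k => inr k | inr k => inl k end.

Definition sgni (c : Idx) : C :=
  match c with inl _ => 1 | inr _ => -1 end.

Definition mat := Idx -> Idx -> C.
(* elements of gl_{2r}[t] = gl_{2r} (x) C[t] : matrices with polynomial entries *)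
Definition cmat := Idx -> Idx -> {poly C}.

Definition is_sp (X : cmat) : Prop :=
  forall c d, X c d = - (sgni c * sgni d) *: X (negi d) (negi c).

Definition cadd (X Y : cmat) : cmat := fun a b => X a b + Y a b.
Definition cscale (k : C) (X : cmat) : cmat := fun a b => k *: X a b.
Definition cbracket (X Y : cmat) : cmat :=
  fun a b => \sum_(c : Idx) (X a c * Y c b - Y a c * X c b).

Definition tens (x : mat) (s : nat) : cmat := fun a b => x a b *: 'X^s.

Definition Emat (a b : int) : mat :=
  fun c d => if (lab c == a) && (lab d == b) then 1 else 0.

Definition madd (x y : mat) : mat := fun a b => x a b + y a b.
Definition msub (x y : mat) : mat := fun a b => x a b - y a b.

Definition hvec (i : nat) : mat := msub (Emat i%:Z i%:Z) (Emat (- i%:Z) (- i%:Z)).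

Definition xplus (i j : nat) : mat :=
  msub (Emat i%:Z (j.+1)%:Z) (Emat (- (j.+1)%:Z) (- i%:Z)).
Definition xminus (i j : nat) : mat :=
  msub (Emat (j.+1)%:Z i%:Z) (Emat (- i%:Z) (- (j.+1)%:Z)).

Definition xplusb (i j : nat) : mat :=
  if i == j then Emat i%:Z (- i%:Z)
  else madd (Emat i%:Z (- j%:Z)) (Emat j%:Z (- i%:Z)).
Definition xminusb (i j : nat) : mat :=
  if i == j then Emat (- i%:Z) i%:Z
  else madd (Emat (- j%:Z) i%:Z) (Emat (- i%:Z) j%:Z).

(* x^-_{i,i} with the convention x^-_{r,r} := x^-_{r,\bar r} *)
Definition xminus_ii (i : nat) : mat :=
  if (i < r)%N then xminus i i else xminusb i i.

Definition is_rep (M : lmodType C) (rho : cmat -> M -> M) : Prop :=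
  [/\ (forall X (k : C) (u v : M), is_sp X -> rho X (k *: u + v) = k *: rho X u + rho X v),
      (forall X Y (k : C) (v : M), is_sp X -> is_sp Y ->
          rho (cadd (cscale k X) Y) v = k *: rho X v + rho Y v) &
      (forall X Y (v : M), is_sp X -> is_sp Y ->
          rho (cbracket X Y) v = rho X (rho Y v) - rho Y (rho X v))].

(* lambda = sum_i m_i omega_i ; lambda_i = m_i + ... + m_r (1-based) *)
Definition lamb (m : nat -> nat) (i : nat) : nat := \sum_(i <= k < r.+1) m k.

Definition weyl_relations (M : lmodType C) (rho : cmat -> M -> M)
    (m : nat -> nat) (w : M) : Prop :=
  [/\ (forall i j s, (1 <= i)%N -> (i <= j)%N -> (j < r)%N -> rho (tens (xplus i j) s) w = 0),
      (forall i j s, (1 <= i)%N -> (i <= j)%N -> (j <= r)%N -> rho (tens (xplusb i j) s) w = 0),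
      (forall i s, (1 <= i)%N -> (i <= r)%N ->
          rho (tens (hvec i) s) w = (if s == 0%N then (lamb m i)%:R else 0) *: w) &
      (forall i, (1 <= i)%N -> (i <= r)%N ->
          iter (m i).+1 (rho (tens (xminus_ii i) 0)) w = 0)].

(* eta j i = eta^j_i, lp j i = lambda^j_i (1-based) *)

Definition fits (s : seq nat) (l l' : int) : bool :=
  [&& (size s)%:Z == l, sorted leq s & all (fun x => x%:Z <= l') s].

Definition is_pattern (lam : nat -> nat) (eta lp : nat -> nat -> int) : Prop :=
  [/\ (forall i, (1 <= i)%N -> (i <= r)%N -> lp r i = (lam i)%:Z),
      (forall i j, (1 <= i)%N -> (i <= j)%N -> (j <= r)%N ->
          lp j i >= eta j i /\ eta j i >= (if (i < j)%N then lp j i.+1 else 0)) &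
      (forall i j, (1 <= i)%N -> (i <= j)%N -> (j < r)%N ->
          eta j.+1 i >= lp j i /\ lp j i >= eta j.+1 i.+1)].

Definition ellb (eta lp : nat -> nat -> int) (i j : nat) : int := lp j i - eta j i.
Definition ellb' (eta lp : nat -> nat -> int) (i j : nat) : int :=
  eta j i - (if (i < j)%N then lp j i.+1 else 0).
Definition ell (eta lp : nat -> nat -> int) (i j : nat) : int := eta j.+1 i - lp j i.
Definition ell' (eta lp : nat -> nat -> int) (i j : nat) : int := lp j i - eta j.+1 i.+1.

(* sb j i = s_{i,\bar j},  sn j i = s_{i,j} *)
Definition is_POP (lam : nat -> nat) (eta lp : nat -> nat -> int)
    (sb sn : nat -> nat -> seq nat) : Prop :=
  [/\ is_pattern lam eta lp,
      (forall i j, (1 <= i)%N -> (i <= j)%N -> (j <= r)%N ->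
          fits (sb j i) (ellb eta lp i j) (ellb' eta lp i j)) &
      (forall i j, (1 <= i)%N -> (i <= j)%N -> (j < r)%N ->
          fits (sn j i) (ell eta lp i j) (ell' eta lp i j))].

Definition pattern_weight (eta lp : nat -> nat -> int) (j : nat) : int :=
  2 * (\sum_(1 <= i < j.+1) eta j i) - (\sum_(1 <= i < j.+1) lp j i)
    - (\sum_(1 <= i < j) lp j.-1 i).

(* x(l, s) as a word (list of factors, leftmost first) *)
Definition xword (x : mat) (s : seq nat) : seq cmat := map (tens x) s.

Definition Xbar (sb : nat -> nat -> seq nat) (j : nat) : seq cmat :=
  flatten [seq xword (xminusb i j) (sb j i) | i <- iota 1 j].
Definition Xn (sn : nat -> nat -> seq nat) (j : nat) : seq cmat :=
  flatten [seq xword (xminus i j) (sn j i) | i <- iota 1 j].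

(* v_P = X_{\bar 1} X_1 ... X_{\bar{r-1}} X_{r-1} X_{\bar r} as a word *)
Definition vword (sb sn : nat -> nat -> seq nat) : seq cmat :=
  flatten [seq Xbar sb j ++ Xn sn j | j <- iota 1 r.-1] ++ Xbar sb r.

Definition act_word (M : lmodType C) (rho : cmat -> M -> M) (L : seq cmat) (v : M) : M :=
  foldr (fun X u => rho X u) v L.

End SpCurrent.

(* Main.v *)
Require Import Defs.
From HB Require Import structures.
From mathcomp Require Import all_boot all_order all_algebra.
From mathcomp Require Import reals complex.
From mathcomp Require Import ring lra zify.
From Stdlib Require Import FunctionalExtensionality.
Set Implicit Arguments. Unset Strict Implicit. Unset Printing Implicit Defensive.
Import Order.TTheory GRing.Theory Num.Theory.
Local Open Scope ring_scope.

Lemma lab_inj (r : nat) (a b : Idx r) : lab a = lab b -> a = b.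
Proof.
case: a => [a|a]; case: b => [b|b] /= H.
- by congr inl; apply: val_inj; move: H => [].
- by exfalso; move: H; lia.
- by exfalso; move: H; lia.
- by congr inr; apply: val_inj; move/oppr_inj: H => [].
Qed.

Lemma lab_negi (r : nat) (a : Idx r) : lab (negi a) = - lab a.
Proof. by case: a => a /=; rewrite ?opprK. Qed.

Lemma sgni_lab (C : fieldType) (r : nat) (a : Idx r) :
  sgni C a = if (0 < lab a) then 1 else -1.
Proof. by case: a => a /=; rewrite ?oppr_gt0 ?ltz_nat. Qed.

Lemma Emat_neg (C : fieldType) (r : nat) (p q : int) (c d : Idx r) :
  Emat C p q (negi d) (negi c) = Emat C (-q) (-p) c d.
Proof.
rewrite /Emat !lab_negi !eqr_oppLR andbC //.
Qed.

Lemma Emat_sign (C : fieldType) (r : nat) (p q : int) (c d : Idx r) :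
  sgni C c * sgni C d * Emat C p q c d
  = (if (0 < p) == (0 < q) then 1 else -1) * Emat C p q c d.
Proof.
rewrite /Emat; case: ifP => [/andP[/eqP<- /eqP<-]|_]; last by rewrite !mulr0.
rewrite !sgni_lab; case: (0 < lab c); case: (0 < lab d) => /=; ring.
Qed.

Definition mat_sp (C : fieldType) (r : nat) (x : mat C r) :=
  forall c d, x c d = - (sgni C c * sgni C d) * x (negi d) (negi c).

Lemma tens_sp (C : fieldType) (r : nat) (x : mat C r) s :
  mat_sp x -> is_sp (tens x s).
Proof. by move=> H c d; rewrite /tens H scalerA. Qed.

Lemma sp_B (C : fieldType) (r : nat) (p q : int) : 0 < p -> 0 < q ->
  mat_sp (msub (Emat C p q) (Emat C (-q) (-p)) : mat C r).
Proof.
move=> hp hq c d; rewrite /msub !Emat_neg !opprK.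
rewrite mulrBr !mulNr !Emat_sign hp hq !oppr_gt0 ltNge (ltW hq) ltNge (ltW hp) /=.
ring.
Qed.

Lemma sp_C (C : fieldType) (r : nat) (p q : int) : p < 0 -> 0 < q ->
  mat_sp (madd (Emat C p q) (Emat C (-q) (-p)) : mat C r).
Proof.
move=> hp hq c d; rewrite /madd !Emat_neg !opprK.
have h1 : (0 < p) = false by apply/negbTE; rewrite -leNgt ltW.
have h2 : (0 < - q) = false by apply/negbTE; rewrite -leNgt oppr_le0 ltW.
rewrite mulrDr !mulNr !Emat_sign h1 h2 hq oppr_gt0 hp /=.
ring.
Qed.

Lemma sp_D (C : fieldType) (r : nat) (p : int) : 0 < p ->
  mat_sp (Emat C (-p) p : mat C r).
Proof.
move=> hp c d; rewrite !Emat_neg !opprK.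
rewrite mulNr !Emat_sign hp oppr_gt0 ltNge (ltW hp) /=.
ring.
Qed.

Definition ind (b : bool) : int := if b then 1 else 0.
Definition dl (k : nat) (z : int) : int := ind (z == k%:Z) - ind (z == - k%:Z).

Lemma dl_opp k z : dl k (- z) = - dl k z.
Proof. by rewrite /dl eqr_opp eqr_oppLR; ring. Qed.

Lemma dl_nat k n : (0 < k)%N -> dl k n%:Z = ind (n == k).
Proof.
move=> hk; rewrite /dl eqz_nat; case: (n =P k) => [->|_]/=.
  have -> : (k%:Z == - k%:Z) = false by apply/negbTE; lia.
  by [].
case: eqP => //; lia.
Qed.

Lemma hvec_diag (C : fieldType) (r : nat) k (a b : Idx r) :
  @hvec C r k a b = if a == b then ((dl k (lab a))%:~R : C) else 0.
Proof.
rewrite /hvec /msub /Emat /dl /ind; case: (a =P b) => [<-|nab].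
  rewrite !andbb; case: (lab a == k%:Z); case: (lab a == - k%:Z) => /=; 
  rewrite ?intrD ?intrN /=; ring.
case: (lab a =P k%:Z) => ha; case: (lab b =P k%:Z) => hb /=;
  try (by exfalso; apply: nab; apply: lab_inj; rewrite ha hb).
all: case: (lab a =P - k%:Z) => ha'; case: (lab b =P - k%:Z) => hb' /=;
  try (by exfalso; apply: nab; apply: lab_inj; rewrite ha' hb').
all: ring.
Qed.

Lemma Emat_wt (C : fieldType) (r : nat) k (p q : int) (a b : Idx r) :
  ((dl k (lab a) - dl k (lab b))%:~R : C) * Emat C p q a b
  = (dl k p - dl k q)%:~R * Emat C p q a b.
Proof.
by rewrite /Emat; case: ifP => [/andP[/eqP-> /eqP->]|_]; rewrite ?mulr0.
Qed.

Definition mat_wt (C : fieldType) (r : nat) k (x : mat C r) (al : int) :=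
  forall a b, ((dl k (lab a) - dl k (lab b))%:~R : C) * x a b = al%:~R * x a b.

Lemma wt_xminus (C : fieldType) (r : nat) k i j :
  mat_wt k (@xminus C r i j) (dl k (j.+1)%:Z - dl k i%:Z).
Proof.
move=> a b; rewrite /xminus /msub !mulrBr !Emat_wt !dl_opp; congr (_ - _ * _).
by congr intmul; ring.
Qed.

Lemma wt_xminusb (C : fieldType) (r : nat) k i j :
  mat_wt k (@xminusb C r i j) (- dl k i%:Z - dl k j%:Z).
Proof.
move=> a b; rewrite /xminusb; case: eqP => [<-|_].
  by rewrite Emat_wt dl_opp.
rewrite /madd !mulrDr !Emat_wt !dl_opp; congr (_ * _ + _ * _).
by congr intmul; ring.
Qed.

Lemma bracket_diag (C : fieldType) (r : nat) (h x : mat C r) (u : Idx r -> C) s :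
  (forall a b, h a b = if a == b then u a else 0) ->
  cbracket (tens h 0) (tens x s) = fun a b => ((u a - u b) * x a b) *: 'X^s.
Proof.
move=> Hh; apply: functional_extensionality => a; apply: functional_extensionality => b.
rewrite /cbracket /tens sumrB (bigD1 a) //= [X in _ - X](bigD1 b) //=.
rewrite [X in _ + X - _]big1; last first.
  by move=> c /negbTE hc; rewrite Hh eq_sym hc scale0r mul0r.
rewrite [X in _ - (_ + X)]big1; last first.
  by move=> c /negbTE hc; rewrite Hh hc scale0r mulr0.
rewrite !addr0 !Hh !eqxx expr0 -scalerAl -scalerAr mul1r -scalerAr mulr1 !scalerA -scalerBl.
by congr (_ *: _); ring.
Qed.

Lemma bracket_hvec (C : fieldType) (r : nat) k (x : mat C r) al s :
  mat_wt k x al ->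
  cbracket (tens (@hvec C r k) 0) (tens x s) = cscale al%:~R (tens x s).
Proof.
move=> Hw; rewrite (bracket_diag _ _ (@hvec_diag C r k)).
apply: functional_extensionality => a; apply: functional_extensionality => b.
by rewrite /cscale /tens scalerA -intrB Hw.
Qed.

Lemma rho0 (C : fieldType) (r : nat) (M : lmodType C) (rho : cmat C r -> M -> M) X :
  is_rep rho -> is_sp X -> rho X 0 = 0.
Proof.
rewrite /is_rep; move=> [H1 _ _] hX. have h := H1 X 1 0 0 hX. rewrite !scale1r addr0 in h.
have : rho X 0 + 0 = rho X 0 + rho X 0 by rewrite addr0; exact: h.
by move/addrI => <-.
Qed.

Lemma rhoZ (C : fieldType) (r : nat) (M : lmodType C) (rho : cmat C r -> M -> M) X k v :
  is_rep rho -> is_sp X -> rho X (k *: v) = k *: rho X v.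
Proof.
move=> Hr hX; case: (Hr) => H1 _ _; have := H1 X k v 0 hX.
by rewrite !addr0 (rho0 Hr hX) addr0.
Qed.

Lemma rho_scale (C : fieldType) (r : nat) (M : lmodType C) (rho : cmat C r -> M -> M) X k v :
  is_rep rho -> is_sp X -> rho (cscale k X) v = k *: rho X v.
Proof.
move=> [_ H2 _] hX.
have -> : cscale k X = cadd (cscale (k - 1) X) X.
  apply: functional_extensionality => a; apply: functional_extensionality => b.
  by rewrite /cadd /cscale scalerBl scale1r subrK.
by rewrite H2 // scalerBl scale1r subrK.
Qed.

Definition wwt (C : fieldType) (r : nat) (M : lmodType C) (rho : cmat C r -> M -> M)
  (H : cmat C r) (L : seq (cmat C r)) (a : int) :=
  forall (v : M) (c : int), rho H v = c%:~R *: v ->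
    rho H (act_word rho L v) = (c + a)%:~R *: act_word rho L v.

Lemma wwt_nil (C : fieldType) (r : nat) (M : lmodType C) (rho : cmat C r -> M -> M) (H : cmat C r) :
  wwt rho H [::] 0.
Proof. by move=> v c; rewrite addr0. Qed.

Lemma wwt_cat (C : fieldType) (r : nat) (M : lmodType C) (rho : cmat C r -> M -> M) (H : cmat C r) L1 L2 a1 a2 :
  wwt rho H L1 a1 -> wwt rho H L2 a2 -> wwt rho H (L1 ++ L2) (a1 + a2).
Proof.
move=> h1 h2 v c hv; rewrite /act_word foldr_cat -!/(act_word _ _ _).
by rewrite (h1 _ _ (h2 v c hv)) -addrA (addrC a2 a1).
Qed.

Lemma wwt_flatten (C : fieldType) (r : nat) (M : lmodType C) (rho : cmat C r -> M -> M) (H : cmat C r)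
  (I : eqType) (s : seq I) (F : I -> seq (cmat C r)) (f : I -> int) :
  (forall i, i \in s -> wwt rho H (F i) (f i)) ->
  wwt rho H (flatten [seq F i | i <- s]) (\sum_(i <- s) f i).
Proof.
elim: s => [|i s IH] hs; first by rewrite big_nil; apply: wwt_nil.
rewrite /= big_cons; apply: wwt_cat; first by apply: hs; rewrite mem_head.
by apply: IH => j hj; apply: hs; rewrite in_cons hj orbT.
Qed.

Lemma wwt_xword (C : fieldType) (r : nat) (M : lmodType C) (rho : cmat C r -> M -> M) k
  (x : mat C r) al s :
  is_rep rho -> (0 < k)%N -> mat_sp x -> mat_wt k x al ->
  wwt rho (tens (@hvec C r k) 0) (xword x s) ((size s)%:Z * al).
Proof.
move=> Hr hk hsp hw; elim: s => [|t s IH] v c hv /=; first by rewrite mul0r addr0.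
have hH : is_sp (tens (@hvec C r k) 0).
  by apply: tens_sp; apply: sp_B; rewrite ltz_nat.
have hX : is_sp (tens x t) by apply: tens_sp.
have := Hr; case=> _ _ H3; have := H3 _ _ (act_word rho (xword x s) v) hH hX.
rewrite (bracket_hvec _ hw) (rho_scale _ _ Hr hX) => /eqP; rewrite eq_sym subr_eq => /eqP.
rewrite /act_word /= -/(act_word _ _ _) => ->.
rewrite (IH v c hv) (rhoZ _ _ Hr hX) -scalerDl -intrD.
by congr (_%:~R *: _); rewrite -addn1 PoszD; ring.
Qed.

Lemma sum_ind (s : seq nat) (F : nat -> int) k : uniq s ->
  \sum_(i <- s) F i * ind (i == k) = if k \in s then F k else 0.
Proof.
elim: s => [|x s IH] /=; first by rewrite big_nil.
move=> /andP[hx hu]; rewrite big_cons IH // in_cons /ind.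
case: (x =P k) => [<-|hxk]; first by rewrite eqxx (negbTE hx) mulr1 addr0.
by rewrite mulr0 add0r (_ : (k == x) = false) //; apply/eqP => e; apply: hxk.
Qed.

Lemma sum_ind' (s : seq nat) (F : nat -> int) k : uniq s ->
  \sum_(i <- s) ind (i == k) * F i = if k \in s then F k else 0.
Proof.
by move=> hu; rewrite -(sum_ind F k hu); apply: eq_bigr => i _; rewrite mulrC.
Qed.

Lemma iotaS1 n : iota 1 n.+1 = iota 1 n ++ [:: n.+1].
Proof. by rewrite -[n.+1]addn1 iotaD /= addnC. Qed.

Lemma natsum_iota (F : nat -> int) n :
  \sum_(1 <= i < n.+1) F i = \sum_(i <- iota 1 n) F i.
Proof. by rewrite /index_iota subSS subn0. Qed.

Lemma telescope (eta lp : nat -> nat -> int) k n : (0 < k)%N ->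
  \sum_(j <- iota 1 n.+1) ind (k <= j)%N * ellb eta lp k j
  + \sum_(j <- iota 1 n) ind (k <= j)%N * ell eta lp k j
  = if (k <= n.+1)%N then lp n.+1 k - eta k k else 0.
Proof.
move=> hk; elim: n => [|n IH].
  rewrite /= big_seq1 big_nil addr0 /ind /ellb.
  case: (k =P 1%N) => [->|hk1] //=; rewrite ?mul1r //.
  have -> : (k <= 1)%N = false by lia.
  by rewrite mul0r.
rewrite (iotaS1 n.+1) {2}(iotaS1 n) !big_cat !big_seq1.
rewrite addrACA IH /ind /ellb /ell.
case h1: (k <= n.+1)%N; case h2: (k <= n.+2)%N.
- ring.
- exfalso; lia.
- have ek : k = n.+2 by lia.
  rewrite ek; ring.
- ring.
Qed.

Definition Wb (k : nat) (sb : nat -> nat -> seq nat) (j : nat) : int :=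
  \sum_(i <- iota 1 j) (size (sb j i))%:Z * (- dl k i%:Z - dl k j%:Z).
Definition Wn (k : nat) (sn : nat -> nat -> seq nat) (j : nat) : int :=
  \sum_(i <- iota 1 j) (size (sn j i))%:Z * (dl k (j.+1)%:Z - dl k i%:Z).

Lemma comb (r : nat) lam eta lp sb sn k : (1 <= k)%N -> (k <= r)%N ->
  is_POP r lam eta lp sb sn ->
  (lam k)%:Z + (\sum_(j <- iota 1 r.-1) (Wb k sb j + Wn k sn j) + Wb k sb r)
  = pattern_weight eta lp k.
Proof.
move=> hk hkr [[Hlam _ _] Hb Hn].
have sizeb j i : (1 <= i)%N -> (i <= j)%N -> (j <= r)%N -> (size (sb j i))%:Z = ellb eta lp i j.
  by move=> h1 h2 h3; have /and3P[/eqP -> _ _] := Hb i j h1 h2 h3.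
have sizen j i : (1 <= i)%N -> (i <= j)%N -> (j < r)%N -> (size (sn j i))%:Z = ell eta lp i j.
  by move=> h1 h2 h3; have /and3P[/eqP -> _ _] := Hn i j h1 h2 h3.
case: r hkr Hlam sizeb sizen {Hb Hn} => [|r'] hkr Hlam sizeb sizen; first by lia.
case: k hk hkr => [|k'] hk hkr; first by lia.
set k := k'.+1.
set A := fun j => \sum_(i <- iota 1 j) ellb eta lp i j * (- ind (i == k) - ind (j == k)).
set B := fun j => \sum_(i <- iota 1 j) ell eta lp i j * (ind (j.+1 == k) - ind (i == k)).
have eA j : (j <= r'.+1)%N -> Wb k sb j = A j.
  move=> hj; rewrite /Wb /A big_seq [RHS]big_seq; apply: eq_bigr => i.
  rewrite mem_iota => /andP[h1 h2].
  by rewrite sizeb ?dl_nat //; lia.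
have eB j : (j <= r')%N -> Wn k sn j = B j.
  move=> hj; rewrite /Wn /B big_seq [RHS]big_seq; apply: eq_bigr => i.
  rewrite mem_iota => /andP[h1 h2].
  by rewrite sizen ?dl_nat //; lia.
rewrite /= (eA r'.+1) //.
rewrite big_seq (eq_bigr (fun j => A j + B j)); last first.
  by move=> j; rewrite mem_iota => /andP[h1 h2]; rewrite eA ?eB //; lia.
rewrite -big_seq big_split /= addrAC.
have -> : \sum_(j <- iota 1 r') A j + A r'.+1 = \sum_(j <- iota 1 r'.+1) A j.
  by rewrite iotaS1 big_cat big_seq1.
have Aj j : A j = - (ind (k <= j)%N * ellb eta lp k j)
    - ind (j == k) * \sum_(i <- iota 1 j) ellb eta lp i j.
  rewrite /A; under eq_bigr do rewrite mulrBr mulrN.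
  rewrite sumrB sumrN sum_ind ?iota_uniq // mem_iota add1n ltnS /=.
  rewrite mulr_sumr; congr (- _ - _); last by apply: eq_bigr => i _; rewrite mulrC.
  by rewrite /ind; case: (k <= j)%N; rewrite ?mul1r ?mul0r.
have Bj j : B j = ind (j == k') * \sum_(i <- iota 1 j) ell eta lp i j
    - ind (k <= j)%N * ell eta lp k j.
  rewrite /B; under eq_bigr do rewrite mulrBr.
  rewrite sumrB sum_ind ?iota_uniq // mem_iota add1n ltnS /=.
  rewrite mulr_sumr; congr (_ - _); first by apply: eq_bigr => i _; rewrite mulrC.
  by rewrite /ind; case: (k <= j)%N; rewrite ?mul1r ?mul0r.
rewrite (eq_bigr _ (fun j _ => Aj j)) (eq_bigr _ (fun j _ => Bj j)).
rewrite !sumrB sumrN sum_ind' ?iota_uniq // sum_ind' ?iota_uniq //.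
rewrite mem_iota add1n ltnS hkr.
have -> : (if k' \in iota 1 r' then \sum_(i <- iota 1 k') ell eta lp i k' else 0)
    = \sum_(i <- iota 1 k') ell eta lp i k'.
  clear -hkr; case: k' hkr => [|k'] hkr. by rewrite big_nil; case: ifP.
  by rewrite mem_iota; case: ifP => //; lia.
have T := telescope eta lp r' (isT : (0 < k)%N).
rewrite hkr Hlam // in T.
rewrite /pattern_weight !natsum_iota.
have -> : (0 < k)%N && true = true by [].
have eX : \sum_(i <- iota 1 r'.+1) ind (k <= i)%N * ellb eta lp k i
   = (lam k)%:Z - eta k k - \sum_(i <- iota 1 r') ind (k <= i)%N * ell eta lp k i.
  by rewrite -T addrK.
rewrite eX /ellb /ell !sumrB (iotaS1 k') !big_cat !big_seq1 /=.
ring.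
Qed.

Lemma sp_xminusb (C : fieldType) (r : nat) i j : (0 < i)%N -> (0 < j)%N ->
  mat_sp (@xminusb C r i j).
Proof.
move=> hi hj; rewrite /xminusb; case: (i =P j) => [->|_].
  by apply: sp_D; rewrite ltz_nat.
have := @sp_C C r (- j%:Z) i%:Z; rewrite opprK; apply.
  by rewrite oppr_lt0 ltz_nat.
by rewrite ltz_nat.
Qed.

Lemma sp_xminus (C : fieldType) (r : nat) i j : (0 < i)%N ->
  mat_sp (@xminus C r i j).
Proof. by move=> hi; apply: sp_B; rewrite ltz_nat. Qed.

Lemma wwt_Xbar (C : fieldType) (r : nat) (M : lmodType C) (rho : cmat C r -> M -> M) k sb j :
  is_rep rho -> (0 < k)%N ->
  wwt rho (tens (@hvec C r k) 0) (Xbar C r sb j) (Wb k sb j).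
Proof.
move=> Hr hk; rewrite /Xbar /Wb; apply: wwt_flatten => i; rewrite mem_iota => /andP[h1 h2].
apply: wwt_xword => //; last exact: wt_xminusb.
by apply: sp_xminusb => //; lia.
Qed.

Lemma wwt_Xn (C : fieldType) (r : nat) (M : lmodType C) (rho : cmat C r -> M -> M) k sn j :
  is_rep rho -> (0 < k)%N ->
  wwt rho (tens (@hvec C r k) 0) (Xn C r sn j) (Wn k sn j).
Proof.
move=> Hr hk; rewrite /Xn /Wn; apply: wwt_flatten => i; rewrite mem_iota => /andP[h1 h2].
apply: wwt_xword => //; last exact: wt_xminus.
by apply: sp_xminus.
Qed.

Theorem lemma3p1 (R : realType) (r : nat) (hr : (1 <= r)%N)
  (M : lmodType R[i]) (rho : cmat R[i] r -> M -> M) (m : nat -> nat) (w : M)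
  (Hrep : is_rep rho) (Hweyl : weyl_relations rho m w)
  (eta lp : nat -> nat -> int) (sb sn : nat -> nat -> seq nat)
  (HP : is_POP r (lamb r m) eta lp sb sn) :
  forall j : nat, (1 <= j)%N -> (j <= r)%N ->
    rho (tens (@hvec R[i] r j) 0) (act_word rho (@vword R[i] r sb sn) w)
    = (pattern_weight eta lp j)%:~R *: act_word rho (@vword R[i] r sb sn) w.
Proof.
move=> j hj hjr.
have Hw : wwt rho (tens (@hvec R[i] r j) 0) (@vword R[i] r sb sn)
  (\sum_(jj <- iota 1 r.-1) (Wb j sb jj + Wn j sn jj) + Wb j sb r).
  rewrite /vword; apply: wwt_cat; last exact: wwt_Xbar.
  apply: wwt_flatten => jj _; apply: wwt_cat; [exact: wwt_Xbar | exact: wwt_Xn].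
have hw : rho (tens (@hvec R[i] r j) 0) w = ((lamb r m j)%:Z)%:~R *: w.
  by case: Hweyl => _ _ H3 _; rewrite H3.
by rewrite (Hw w _ hw) (comb hj hjr HP).
Qed.
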